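(* Let $p$ be an odd prime, $m,r$ positive integers and $k\in\{0,1,\dots,mp^r\}$. Then $$k\binom{2k}{k}\binom{2(mp^r-k)}{mp^r-k}\equiv0\pmod{p^r}.$$ *)

(* Defs.v *)
From mathcomp Require Import all_boot.

(* Main.v *)
Require Import Defs.
From mathcomp Require Import all_boot.
From mathcomp Require Import zify.

Lemma t_split k q : 0 < q -> (2 * k) %/ q = 2 * (k %/ q) + (2 * (k %% q)) %/ q.
Proof.
move=> q0; rewrite {1}(divn_eq k q) mulnDr mulnA divnMDl //.
Qed.

Lemma logn_fact_ext p n N : prime p -> n < N ->
  logn p n`! = \sum_(1 <= i < N) n %/ p ^ i.
Proof.
move=> pp nN; rewrite logn_fact // [RHS](big_cat_nat _ (n:=n.+1)) //=.
rewrite [X in _ = _ + X]big1_seq ?addn0 // => i /andP [_].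
rewrite mem_iota => /andP [hi _]; apply: divn_small.
apply: (leq_trans hi); apply: ltnW; apply: ltn_expl; exact: prime_gt1.
Qed.

Lemma logn_bin p k N : prime p -> 2 * k < N ->
  logn p 'C(2 * k, k) = \sum_(1 <= i < N) (2 * (k %% p ^ i)) %/ p ^ i.
Proof.
move=> pp hN.
have hk : k <= 2 * k by lia.
have := bin_fact hk.
have -> : 2 * k - k = k by lia.
move=> E.
have h1 : logn p (2 * k)`! = logn p 'C(2 * k, k) + (logn p k`! + logn p k`!).
  by rewrite -E lognM ?bin_gt0 ?muln_gt0 ?fact_gt0 // lognM ?fact_gt0.
have h2 : logn p (2 * k)`! = 2 * logn p k`! + \sum_(1 <= i < N) (2 * (k %% p ^ i)) %/ p ^ i.
  rewrite (logn_fact_ext p (2 * k) N pp hN) (logn_fact_ext p k N pp (_ : k < N)); last lia.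
  rewrite big_distrr -big_split /=; apply: eq_bigr => i _.
  apply: t_split; rewrite expn_gt0 prime_gt0 //.
lia.
Qed.

Lemma key k j q : 0 < q -> q %| k + j -> ~~ (q %| k) ->
  1 <= (2 * (k %% q)) %/ q + (2 * (j %% q)) %/ q.
Proof.
move=> q0 hkj hk.
have x0 : 0 < k %% q by rewrite lt0n -/(dvdn q k).
have xq := ltn_pmod k q0; have yq := ltn_pmod j q0.
case: (leqP q (2 * (k %% q))) => h1.
  have h : 0 < (2 * (k %% q)) %/ q by rewrite divn_gt0.
  exact: leq_trans h (leq_addr _ _).
case: (leqP q (2 * (j %% q))) => h2.
  have h : 0 < (2 * (j %% q)) %/ q by rewrite divn_gt0.
  exact: leq_trans h (leq_addl _ _).
exfalso.
have E : (k %% q + j %% q) %% q = 0 by rewrite modnDm; exact/eqP.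
rewrite modn_small in E; lia.
Qed.

Theorem lemma2p12 (p m r k : nat) :
  prime p -> odd p -> 0 < m -> 0 < r -> k <= m * p ^ r ->
  p ^ r %| k * 'C(2 * k, k) * 'C(2 * (m * p ^ r - k), m * p ^ r - k).
Proof.
move=> pp _ m0 r0 hk.
set n := m * p ^ r in hk *.
set j := n - k.
case: (posnP k) => [-> | k0]; first by rewrite !mul0n dvdn0.
case hd: (p ^ r %| k); first by rewrite -mulnA dvdn_mulr.
have p1 := prime_gt1 pp.
have hpr : r < p ^ r by apply: ltn_expl.
have n1 : p ^ r <= n by rewrite /n leq_pmull.
set a := logn p k.
have ar : a < r by move: hd; rewrite pfactor_dvdn // => /negbT; rewrite -ltnNge.
rewrite pfactor_dvdn ?muln_gt0 ?k0 ?bin_gt0 ?leq_pmull //.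
rewrite !lognM ?muln_gt0 ?k0 ?bin_gt0 ?leq_pmull //; try lia.
set N := (2 * n).+1.
rewrite (logn_bin p k N pp (_ : 2 * k < N)); last by rewrite /N; lia.
rewrite (logn_bin p j N pp (_ : 2 * j < N)); last by rewrite /N /j; lia.
rewrite -/a -addnA -big_split /=.
have : r - a <= \sum_(1 <= i < N)
   ((2 * (k %% p ^ i)) %/ p ^ i + (2 * (j %% p ^ i)) %/ p ^ i).
  rewrite (big_cat_nat _ (n:=a.+1)) //=; last lia.
  rewrite (big_cat_nat _ (m:=a.+1) (n:=r.+1)) //=; [|lia|lia].
  apply: leq_trans (leq_addl _ _) .
  apply: leq_trans (leq_addr _ _).
  have -> : r - a = \sum_(a.+1 <= i < r.+1) 1 by rewrite sum_nat_const_nat; lia.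
  rewrite big_seq_cond [X in _ <= X]big_seq_cond; apply: leq_sum => i.
  rewrite mem_index_iota andbT => /andP [hi1 hi2].
  apply: key; first by rewrite expn_gt0 prime_gt0.
    have -> : k + j = n by rewrite /j; lia.
    by rewrite /n dvdn_mull // dvdn_exp2l //; lia.
  by rewrite pfactor_dvdn //; lia.
lia.
Qed.
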